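(* Let $E$ be a set, let $\Sigma^{(0)}_E$ be the group of permutations of $E$ fixing all but finitely many elements of $E$, and let $\Sigma_E$ be the set of virtual permutations of $E$. For every $g \in \Sigma^{(0)}_E$ and every $\sigma = (\sigma_I)_{I \in \mathcal{F}(E)} \in \Sigma_E$, there exists a unique virtual permutation $g\sigma g^{-1} = (\sigma'_I)_{I \in \mathcal{F}(E)} \in \Sigma_E$ such that $\sigma'_I = g_I \sigma_I g_I^{-1}$ for every finite $I \subset E$ containing all points of $E$ not fixed by $g$, where $g_I$ denotes the restriction of $g$ to $I$. The map $(g,\sigma) \mapsto g\sigma g^{-1}$ is a group action of $\Sigma^{(0)}_E$ on $\Sigma_E$, and the cycles of $g\sigma g^{-1}$ are the images by $g$ of the cycles of $\sigma$.
   Context: $\mathcal{F}(E)$ denotes the set of finite subsets of $E$, $\Sigma_I$ the symmetric group of a finite set $I$. For finite $I \subset J$ and $\tau \in \Sigma_J$, $\pi_{J,I}(\tau) \in \Sigma_I$ (''removing the elements of $J\setminus I$ from the cycle structure of $\tau$'') is defined by $\pi_{J,I}(\tau)(x) = \tau^m(x)$ with $m\geq 1$ minimal such that $\tau^m(x) \in I$. A virtual permutation of $E$ is a family $(\sigma_I)_{I \in \mathcal{F}(E)}$ with $\sigma_I \in \Sigma_I$ and $\sigma_I = \pi_{J,I}(\sigma_J)$ for all finite $I \subset J$. For a virtual permutation $\sigma$, two elements $x,y \in E$ are equivalent if they lie in the same cycle of $\sigma_I$ for some (equivalently, every) finite $I$ containing both; the equivalence classes are called the cycles of $\sigma$. 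*)

(* Defs.v *)
From HB Require Import structures.
From mathcomp Require Import all_boot.
From mathcomp Require Import finmap.
Set Implicit Arguments. Unset Strict Implicit. Unset Printing Implicit Defensive.
Local Open Scope fset_scope.

Section VirtualPerm.
Variable E : choiceType.

(* An element of Sigma_I (I finite) is represented by its canonical extension
   to E: a map E -> E inducing a bijection of I and fixing every point outside I. *)
Definition is_perm_on (I : {fset E}) (s : E -> E) : Prop :=
  [/\ (forall x, x \in I -> s x \in I),
      (forall x y, x \in I -> y \in I -> s x = s y -> x = y),
      (forall y, y \in I -> exists2 x, x \in I & s x = y)
    & (forall x, x \notin I -> s x = x)].

Definition is_proj (I : {fset E}) (t s : E -> E) : Prop :=
  forall x, x \in I ->
    exists m, [/\ 0 < m, iter m t x \in I,
                  (forall k, 0 < k < m -> iter k t x \notin I)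
                & s x = iter m t x].

Definition virtual_perm (sigma : {fset E} -> E -> E) : Prop :=
  (forall I, is_perm_on I (sigma I)) /\
  (forall I J, I `<=` J -> is_proj I (sigma J) (sigma I)).

Definition fixes_outside (g : E -> E) (S : {fset E}) : Prop :=
  forall x, x \notin S -> g x = x.

Definition finitary_perm (g : E -> E) : Prop :=
  bijective g /\ exists S : {fset E}, fixes_outside g S.

(* sigma'_I = g_I sigma_I g_I^{-1} for every finite I containing all points
   not fixed by g (written as sigma'_I o g_I = g_I o sigma_I on I; both sides
   are the identity outside I). *)
Definition conj_spec (g : E -> E) (sigma sigma' : {fset E} -> E -> E) : Prop :=
  forall I : {fset E}, fixes_outside g I ->
    forall x, x \in I -> sigma' I (g x) = g (sigma I x).

Definition same_cycle (sigma : {fset E} -> E -> E) (x y : E) : Prop :=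
  exists I : {fset E}, [/\ x \in I, y \in I & exists n, iter n (sigma I) x = y].

Definition is_cycle (sigma : {fset E} -> E -> E) (C : E -> Prop) : Prop :=
  exists x, C = same_cycle sigma x.

Definition img_set (g : E -> E) (D : E -> Prop) : E -> Prop :=
  fun z => exists2 y, D y & z = g y.

End VirtualPerm.

(* Main.v *)
Require Import Defs.
From HB Require Import structures.
From mathcomp Require Import all_boot.
From mathcomp Require Import finmap.
From Stdlib Require Import FunctionalExtensionality PropExtensionality.

Set Implicit Arguments. Unset Strict Implicit. Unset Printing Implicit Defensive.

Section Helpers.
Variable E : choiceType.
Local Open Scope fset_scope.
Implicit Types (I J S : {fset E}) (g ginv : E -> E) (sigma tau : {fset E} -> E -> E).

Lemma maps_in g S : injective g -> fixes_outside g S -> forall x, x \in S -> g x \in S.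
Proof.
move=> gi fo x xS; apply/negPn/negP => gx.
have := fo _ gx => /gi e; by move: gx; rewrite e xS.
Qed.

Lemma inv_fixes g ginv S : cancel g ginv -> cancel ginv g ->
  fixes_outside g S -> fixes_outside ginv S.
Proof.
move=> c1 c2 fo y yS.
have gi : injective g := can_inj c1.
case: (boolP (ginv y \in S)) => h.
  by have := maps_in gi fo h; rewrite c2 (negbTE yS).
by have := fo _ h; rewrite c2 => /esym.
Qed.

Lemma fixes_sub g S J : S `<=` J -> fixes_outside g S -> fixes_outside g J.
Proof.
move=> /fsubsetP sub fo x xJ; apply: fo; apply/negP => /sub; by rewrite (negbTE xJ).
Qed.

Lemma iter_conj g ginv (t t' : E -> E) : cancel g ginv ->
  (forall y, t' y = g (t (ginv y))) -> forall n x, iter n t' (g x) = g (iter n t x).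
Proof.
move=> c1 h; elim=> [|n IH] x //=; by rewrite IH h c1.
Qed.

Lemma proj_unique I t s1 s2 : is_proj I t s1 -> is_proj I t s2 ->
  forall x, x \in I -> s1 x = s2 x.
Proof.
move=> p1 p2 x xI.
have [m1 [m1p i1 n1 e1]] := p1 x xI; have [m2 [m2p i2 n2 e2]] := p2 x xI.
case: (ltngtP m1 m2) => c.
- by have := n2 m1; rewrite m1p c i1 => /(_ isT).
- by have := n1 m2; rewrite m2p c i2 => /(_ isT).
- by rewrite e1 e2 c.
Qed.

Lemma virt_ext sigma1 sigma2 S : virtual_perm sigma1 -> virtual_perm sigma2 ->
  (forall J, S `<=` J -> forall y, sigma1 J y = sigma2 J y) -> sigma1 = sigma2.
Proof.
move=> [p1 q1] [p2 q2] h; apply: functional_extensionality => I.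
apply: functional_extensionality => x.
case: (boolP (x \in I)) => xI; last first.
  by have [_ _ _ h1] := p1 I; have [_ _ _ h2] := p2 I; rewrite h1 // h2.
have e : sigma1 (I `|` S) = sigma2 (I `|` S).
  by apply: functional_extensionality; apply: h; apply: fsubsetUr.
have := q2 _ _ (fsubsetUl I S); rewrite -e => q2'.
exact: proj_unique (q1 _ _ (fsubsetUl I S)) q2' x xI.
Qed.

Lemma conj_full g ginv sigma tau S : cancel g ginv -> cancel ginv g ->
  fixes_outside g S -> virtual_perm sigma -> virtual_perm tau ->
  conj_spec g sigma tau -> forall J, S `<=` J -> forall y, tau J y = g (sigma J (ginv y)).
Proof.
move=> c1 c2 fo [ps _] [pt _] cs J sJ y.
have foJ := fixes_sub sJ fo.
have foiJ := inv_fixes c1 c2 foJ.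
case: (boolP (y \in J)) => yJ.
  have := cs J foJ (ginv y) (maps_in (can_inj c2) foiJ yJ); by rewrite c2.
have [_ _ _ ->] := pt J => //.
have e := foiJ _ yJ; rewrite e.
have [_ _ _ h4] := ps J; by rewrite h4 // foJ.
Qed.

Lemma same_cycle_up sigma I J x n : virtual_perm sigma -> I `<=` J -> x \in I ->
  exists k, iter k (sigma J) x = iter n (sigma I) x.
Proof.
move=> [ps qs] IJ xI.
have inI : forall n, iter n (sigma I) x \in I.
  by elim=> [|m IH] //=; have [h _ _ _] := ps I; apply: h.
elim: n => [|n [k IH]]; first by exists 0.
have [m [_ _ _ e]] := qs _ _ IJ _ (inI n).
by exists (m + k)%N; rewrite /= e -IH iterD.
Qed.

Definition conjJ g ginv sigma tau S :=
  forall J, S `<=` J -> forall y, tau J y = g (sigma J (ginv y)).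

Lemma same_cycle_conj g ginv sigma tau S : cancel g ginv -> cancel ginv g ->
  fixes_outside g S -> virtual_perm sigma -> virtual_perm tau ->
  conjJ g ginv sigma tau S ->
  forall a b, same_cycle tau a b <-> same_cycle sigma (ginv a) (ginv b).
Proof.
move=> c1 c2 fo vs vt cj a b; split.
- move=> [I [aI bI [n hn]]].
  have [k hk] := same_cycle_up n vt (fsubsetUl I S) aI.
  have foJ := fixes_sub (fsubsetUr I S) fo.
  have foiJ := inv_fixes c1 c2 foJ.
  have aJ : a \in I `|` S by rewrite in_fsetU aI.
  have bJ : b \in I `|` S by rewrite in_fsetU bI.
  exists (I `|` S); split; try exact: (maps_in (can_inj c2) foiJ).
  exists k; apply: (can_inj c1).
  rewrite c2 -(iter_conj c1 (cj _ (fsubsetUr I S))) c2 hk hn //.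
- move=> [I [aI bI [n hn]]].
  have [k hk] := same_cycle_up n vs (fsubsetUl I S) aI.
  have foJ := fixes_sub (fsubsetUr I S) fo.
  have aJ : ginv a \in I `|` S by rewrite in_fsetU aI.
  have bJ : ginv b \in I `|` S by rewrite in_fsetU bI.
  exists (I `|` S); split.
  + by rewrite -(c2 a); apply: (maps_in (can_inj c1) foJ).
  + by rewrite -(c2 b); apply: (maps_in (can_inj c1) foJ).
  exists k; rewrite -{1}(c2 a) (iter_conj c1 (cj _ (fsubsetUr I S))) hk hn c2 //.
Qed.

Lemma cycle_conj g ginv sigma tau S : cancel g ginv -> cancel ginv g ->
  fixes_outside g S -> virtual_perm sigma -> virtual_perm tau ->
  conjJ g ginv sigma tau S ->
  forall C : E -> Prop,
    is_cycle tau C <-> exists2 D, is_cycle sigma D & C = img_set g D.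
Proof.
move=> c1 c2 fo vs vt cj C.
have sc := same_cycle_conj c1 c2 fo vs vt cj.
split.
- move=> [x0 ->]; exists (same_cycle sigma (ginv x0)); first by exists (ginv x0).
  apply: functional_extensionality => z; apply: propositional_extensionality.
  split.
  + by move=> /sc h; exists (ginv z); rewrite ?c2.
  + by move=> [y hy ->]; apply/sc; rewrite c1.
- move=> [D [y0 ->] ->]; exists (g y0).
  apply: functional_extensionality => z; apply: propositional_extensionality.
  split.
  + by move=> [y hy ->]; apply/sc; rewrite !c1.
  + by move=> /sc h; exists (ginv z); rewrite ?c2 // -(c1 y0).
Qed.

Definition conjv g ginv sigma : {fset E} -> E -> E :=
  fun I x => g (sigma [fset ginv y | y in I] (ginv x)).

Lemma memK g ginv I y : cancel g ginv -> cancel ginv g ->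
  (y \in [fset ginv x | x in I]) = (g y \in I).
Proof.
move=> c1 c2; apply/imfsetP/idP.
- by move=> [x xI ->]; rewrite c2.
- by move=> h; exists (g y); rewrite ?c1.
Qed.

Lemma conjv_virtual g ginv sigma : cancel g ginv -> cancel ginv g ->
  virtual_perm sigma -> virtual_perm (conjv g ginv sigma).
Proof.
move=> c1 c2 [ps qs].
have mm : forall I y, (y \in [fset ginv x | x in I]) = (g y \in I).
  by move=> I y; apply: memK.
split.
- move=> I; set K := [fset ginv y | y in I].
  have mK : forall y, (y \in K) = (g y \in I) by move=> y; apply: memK.
  have [h1 h2 h3 h4] := ps K; split; rewrite /conjv -/K.
  + by move=> x xI; rewrite -mK; apply: h1; rewrite mK c2.
  + move=> x y xI yI /(can_inj c1) /h2.
    by rewrite !mK !c2 => /(_ xI yI) /(can_inj c2).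
  + move=> y yI; have [z zK ez] : exists2 z, z \in K & sigma K z = ginv y by apply: h3; rewrite mK c2.
    by exists (g z); rewrite -?mK // c1 ez c2.
  + by move=> x xI; rewrite h4 ?c2 // mK c2.
- move=> I J IJ x xI; set KI := [fset ginv y | y in I]; set KJ := [fset ginv y | y in J].
  have KIJ : KI `<=` KJ.
    apply/fsubsetP => y; rewrite !mm; exact: (fsubsetP IJ).
  have gxK : ginv x \in KI by rewrite mm c2.
  have [m [mp im nm em]] := qs _ _ KIJ (ginv x) gxK.
  have ic : forall k, iter k (conjv g ginv sigma J) x = g (iter k (sigma KJ) (ginv x)).
    by move=> k; rewrite -{1}(c2 x); apply: iter_conj.
  exists m; split => //.
  + by rewrite ic -mm.
  + by move=> k hk; rewrite ic -mm; apply: nm.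
  + by rewrite ic /conjv -/KI em.
Qed.

Lemma conjv_spec g ginv sigma : cancel g ginv -> cancel ginv g ->
  conj_spec g sigma (conjv g ginv sigma).
Proof.
move=> c1 c2 I fo x xI; rewrite /conjv c1.
suff -> : [fset ginv y | y in I] = I by [].
apply/fsetP => y; rewrite (memK I y c1 c2); apply/idP/idP.
- move=> h; rewrite -(c1 y); exact: maps_in (can_inj c2) (inv_fixes c1 c2 fo) _ h.
- exact: maps_in (can_inj c1) fo y.
Qed.

End Helpers.

Local Open Scope fset_scope.

Theorem proposition2p6 (E : choiceType) :
  (* existence and uniqueness of g sigma g^{-1} *)
  (forall (g : E -> E) (sigma : {fset E} -> E -> E),
      finitary_perm g -> virtual_perm sigma ->
      exists sigma', (virtual_perm sigma' /\ conj_spec g sigma sigma') /\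
        forall sigma'', virtual_perm sigma'' /\ conj_spec g sigma sigma'' ->
                        sigma'' = sigma') /\
  (* the map (g, sigma) |-> g sigma g^{-1} is a group action, and cycles are transported by g *)
  (forall act : (E -> E) -> ({fset E} -> E -> E) -> ({fset E} -> E -> E),
      (forall g sigma, finitary_perm g -> virtual_perm sigma ->
         virtual_perm (act g sigma) /\ conj_spec g sigma (act g sigma)) ->
      [/\ (forall sigma, virtual_perm sigma -> act id sigma = sigma),
          (forall g h sigma, finitary_perm g -> finitary_perm h -> virtual_perm sigma ->
             act (g \o h) sigma = act g (act h sigma))
        & (forall g sigma, finitary_perm g -> virtual_perm sigma ->
             forall C : E -> Prop,
               is_cycle (act g sigma) C <->
               exists2 D, is_cycle sigma D & C = img_set g D)]).
Proof.
split.
- move=> g sigma [[ginv c1 c2] [S fo]] vs.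
  have vt := conjv_virtual c1 c2 vs.
  have ct := conjv_spec sigma c1 c2.
  exists (conjv g ginv sigma); split => // s'' [v'' c''].
  apply: (virt_ext (S := S)) => // J SJ y.
  by rewrite (conj_full c1 c2 fo vs v'' c'') // (conj_full c1 c2 fo vs vt ct).
- move=> act hact; split.
  + move=> sigma vs.
    have fid : finitary_perm (@id E) by split; [exists id | exists fset0].
    have [va ca] := hact _ _ fid vs.
    apply: (virt_ext (S := fset0)) => // J _ y.
    by rewrite (conj_full (ginv := id) _ _ (S := fset0) _ vs va ca).
  + move=> g h sigma fg fh vs.
    have [[gi c1 c2] [Sg fog]] := fg; have [[hi d1 d2] [Sh foh]] := fh.
    have fgh : finitary_perm (g \o h).
      split; first by exists (hi \o gi) => x /=; rewrite ?c1 ?d1 ?d2 ?c2.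
      exists (Sg `|` Sh) => x; rewrite in_fsetU negb_or => /andP [xg xh] /=.
      by rewrite foh // fog.
    have [va ca] := hact _ _ fgh vs.
    have [vh ch] := hact _ _ fh vs.
    have [vgh cgh] := hact _ _ fg vh.
    have e1 : cancel (g \o h) (hi \o gi) by move=> x /=; rewrite c1 d1.
    have e2 : cancel (hi \o gi) (g \o h) by move=> x /=; rewrite d2 c2.
    have foS : fixes_outside (g \o h) (Sg `|` Sh).
      move=> x; rewrite in_fsetU negb_or => /andP [xg xh] /=.
      by rewrite foh // fog.
    apply: (virt_ext (S := Sg `|` Sh)) => // J SJ y.
    rewrite (conj_full e1 e2 foS vs va ca) //.
    rewrite (conj_full c1 c2 fog vh vgh cgh) //; last first.
      by apply: fsubset_trans SJ; apply: fsubsetUl.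
    rewrite (conj_full d1 d2 foh vs vh ch) //.
    by apply: fsubset_trans SJ; apply: fsubsetUr.
  + move=> g sigma [[gi c1 c2] [S fo]] vs C.
    have [va ca] := hact g sigma (conj (Bijective c1 c2) (ex_intro _ S fo)) vs.
    exact: (cycle_conj c1 c2 fo vs va (conj_full c1 c2 fo vs va ca)).
Qed.
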